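(* Let $\varepsilon,\Delta t,\Delta x_1,\Delta x_2,\underline{\rho},\underline{a}>0$, $\underline{\mathbf{u}}=(\underline{u}_1,\underline{u}_2)\in\mathbb{R}^2$ and $b^{(2)}_1,b^{(2)}_2,b^{(2)}_3\in\mathbb{R}$. Let $(\rho,\mathbf{u})\in C^1([0,\infty);H^2(\mathbb{T}^2)^3)$ solve $$\partial_t\begin{pmatrix}\rho\\ \mathbf{u}\end{pmatrix}+(\underline{\mathbf{u}}\cdot\nabla)\begin{pmatrix}\rho\\ \mathbf{u}\end{pmatrix}+\begin{pmatrix}\underline{\rho}\nabla\cdot\mathbf{u}\\ \frac{\underline{a}^2}{\underline{\rho}\varepsilon^2}\nabla\rho\end{pmatrix}=\mathcal{B}^{(2)}\begin{pmatrix}\rho\\ \mathbf{u}\end{pmatrix}$$ on $\mathbb{T}^2$, with $\mathcal{B}^{(2)}$ as in the context. If $(\rho(0,\cdot),\mathbf{u}(0,\cdot))\in\mathcal{E}$, then $(\rho(t,\cdot),\mathbf{u}(t,\cdot))\in\mathcal{E}$ for all $t>0$.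
   Context: $\mathcal{E}=\{(\rho,\mathbf{u})\in L^2(\mathbb{T}^2)^{3}:\nabla\rho=0,\ \nabla\cdot\mathbf{u}=0\}$. With $D=\underline{\mathbf{u}}\cdot\nabla$: $\mathcal{B}^{(2)}_{1,1}=\Delta t\big(b^{(2)}_1D^2+b^{(2)}_3\frac{\underline{a}^2}{\varepsilon^2}\Delta\big)+\frac12\sum_{k=1}^2\Delta x_k|\underline{u}_k|\partial_{x_k}^2$, $\mathcal{B}^{(2)}_{1,2}=\Delta t\,\underline{\rho}\,b^{(2)}_2D\nabla\cdot$, $\mathcal{B}^{(2)}_{2,1}=\Delta t\frac{\underline{a}^2}{\underline{\rho}\varepsilon^2}b^{(2)}_2D\nabla$, $\mathcal{B}^{(2)}_{2,2}=\Delta t\big(b^{(2)}_1D^2+b^{(2)}_3\frac{\underline{a}^2}{\varepsilon^2}\nabla\nabla\cdot\big)+\frac12\sum_{k=1}^2\Delta x_k|\underline{u}_k|\partial_{x_k}^2\mathbb{I}_2$ (first row scalar, second row vector valued). This is the modified equation of a first order fully-discrete IMEX-RK finite volume scheme applied to the linear wave system; in the paper the $b^{(2)}_i$ are specific polynomials in the Butcher coefficients. *)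

(* Defs.v *)
From Stdlib Require Import Reals ZArith.
Open Scope R_scope.

Record Cx := mkC { re : R; im : R }.
Definition C0 : Cx := mkC 0 0.
Definition Cadd (x y : Cx) : Cx := mkC (re x + re y) (im x + im y).
Definition Cmul (x y : Cx) : Cx :=
  mkC (re x * re y - im x * im y) (re x * im y + im x * re y).
Definition Cscale (r : R) (x : Cx) : Cx := mkC (r * re x) (r * im x).
Definition Cconj (x : Cx) : Cx := mkC (re x) (- im x).
Definition Cnorm2 (x : Cx) : R := re x * re x + im x * im x.

(* ---------- Fourier coefficients on T^2 = (R/2piZ)^2 ----------
   A (complex) L^2 function f on T^2 is represented by its Fourier
   coefficients  f_hat : Z -> Z -> Cx  (f = sum_k f_hat k e^{i k.x}). *)
Definition Fcoef := Z -> Z -> Cx.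
Definition Fzero : Fcoef := fun _ _ => C0.
Definition Fadd (f g : Fcoef) : Fcoef := fun a b => Cadd (f a b) (g a b).
Definition Fscale (r : R) (f : Fcoef) : Fcoef := fun a b => Cscale r (f a b).
Definition Fsub (f g : Fcoef) : Fcoef := Fadd f (Fscale (-1) g).

Definition pd1 (f : Fcoef) : Fcoef := fun a b => Cmul (mkC 0 (IZR a)) (f a b).
Definition pd2 (f : Fcoef) : Fcoef := fun a b => Cmul (mkC 0 (IZR b)) (f a b).
Definition lap (f : Fcoef) : Fcoef := Fadd (pd1 (pd1 f)) (pd2 (pd2 f)).
Definition divg (u1 u2 : Fcoef) : Fcoef := Fadd (pd1 u1) (pd2 u2).

Definition realF (f : Fcoef) : Prop :=
  forall a b, f (- a)%Z (- b)%Z = Cconj (f a b).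

Definition boxsum (N : nat) (g : Z -> Z -> R) : R :=
  sum_f_R0 (fun i => sum_f_R0 (fun j =>
     g (Z.of_nat i - Z.of_nat N)%Z (Z.of_nat j - Z.of_nat N)%Z) (2 * N)) (2 * N).

Definition w0 (a b : Z) : R := 1.
Definition w2 (a b : Z) : R := (1 + IZR a ^ 2 + IZR b ^ 2) ^ 2.

Definition normsq_le (w : Z -> Z -> R) (f : Fcoef) (M : R) : Prop :=
  forall N, boxsum N (fun a b => w a b * Cnorm2 (f a b)) <= M.
Definition inL2 (f : Fcoef) : Prop := exists M, normsq_le w0 f M.
Definition inH2 (f : Fcoef) : Prop := exists M, normsq_le w2 f M.

Record State := mkS { sr : Fcoef; su1 : Fcoef; su2 : Fcoef }.
Definition Sadd (U V : State) : State :=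
  mkS (Fadd (sr U) (sr V)) (Fadd (su1 U) (su1 V)) (Fadd (su2 U) (su2 V)).
Definition Sscale (r : R) (U : State) : State :=
  mkS (Fscale r (sr U)) (Fscale r (su1 U)) (Fscale r (su2 U)).
Definition Ssub (U V : State) : State := Sadd U (Sscale (-1) V).

Definition realS (U : State) : Prop := realF (sr U) /\ realF (su1 U) /\ realF (su2 U).
Definition inL2S (U : State) : Prop := inL2 (sr U) /\ inL2 (su1 U) /\ inL2 (su2 U).
Definition inH2S (U : State) : Prop := inH2 (sr U) /\ inH2 (su1 U) /\ inH2 (su2 U).

Definition H2S_le (U : State) (M : R) : Prop :=
  forall N, boxsum N (fun a b => w2 a b *
     (Cnorm2 (sr U a b) + Cnorm2 (su1 U a b) + Cnorm2 (su2 U a b))) <= M.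

Definition inE (U : State) : Prop :=
  inL2S U /\ pd1 (sr U) = Fzero /\ pd2 (sr U) = Fzero /\
  divg (su1 U) (su2 U) = Fzero.

Definition C1_H2 (U dU : R -> State) : Prop :=
  (forall t, 0 <= t -> inH2S (U t) /\ inH2S (dU t) /\ realS (U t) /\ realS (dU t)) /\
  (forall t, 0 <= t -> forall e, 0 < e -> exists d, 0 < d /\
     forall h, h <> 0 -> Rabs h < d -> 0 <= t + h ->
       H2S_le (Ssub (Sscale (/ h) (Ssub (U (t + h)) (U t))) (dU t)) e) /\
  (forall t, 0 <= t -> forall e, 0 < e -> exists d, 0 < d /\
     forall s, 0 <= s -> Rabs (s - t) < d -> H2S_le (Ssub (dU s) (dU t)) e).

Record params := mkP {
  p_eps : R; p_dt : R; p_dx1 : R; p_dx2 : R; p_rhob : R; p_ab : R;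
  p_ub1 : R; p_ub2 : R; p_b1 : R; p_b2 : R; p_b3 : R }.

Section Ops.
Variable P : params.
Let eps := p_eps P. Let dt := p_dt P. Let dx1 := p_dx1 P. Let dx2 := p_dx2 P.
Let rhob := p_rhob P. Let ab := p_ab P. Let ub1 := p_ub1 P. Let ub2 := p_ub2 P.
Let b1 := p_b1 P. Let b2 := p_b2 P. Let b3 := p_b3 P.

Definition Dadv (f : Fcoef) : Fcoef := Fadd (Fscale ub1 (pd1 f)) (Fscale ub2 (pd2 f)).
Definition visc (f : Fcoef) : Fcoef :=
  Fscale (1/2) (Fadd (Fscale (dx1 * Rabs ub1) (pd1 (pd1 f)))
                     (Fscale (dx2 * Rabs ub2) (pd2 (pd2 f)))).

Definition B11 (f : Fcoef) : Fcoef :=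
  Fadd (Fscale dt (Fadd (Fscale b1 (Dadv (Dadv f)))
                        (Fscale (b3 * ab ^ 2 / eps ^ 2) (lap f)))) (visc f).
Definition B12 (u1 u2 : Fcoef) : Fcoef :=
  Fscale (dt * rhob * b2) (Dadv (divg u1 u2)).
Definition B21 (pd : Fcoef -> Fcoef) (f : Fcoef) : Fcoef :=
  Fscale (dt * (ab ^ 2 / (rhob * eps ^ 2)) * b2) (Dadv (pd f)).
Definition B22 (pd : Fcoef -> Fcoef) (uj u1 u2 : Fcoef) : Fcoef :=
  Fadd (Fscale dt (Fadd (Fscale b1 (Dadv (Dadv uj)))
                        (Fscale (b3 * ab ^ 2 / eps ^ 2) (pd (divg u1 u2))))) (visc uj).

Definition Bop (U : State) : State :=
  mkS (Fadd (B11 (sr U)) (B12 (su1 U) (su2 U)))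
      (Fadd (B21 pd1 (sr U)) (B22 pd1 (su1 U) (su1 U) (su2 U)))
      (Fadd (B21 pd2 (sr U)) (B22 pd2 (su2 U) (su1 U) (su2 U))).

Definition Lop (U : State) : State :=
  mkS (Fadd (Dadv (sr U)) (Fscale rhob (divg (su1 U) (su2 U))))
      (Fadd (Dadv (su1 U)) (Fscale (ab ^ 2 / (rhob * eps ^ 2)) (pd1 (sr U))))
      (Fadd (Dadv (su2 U)) (Fscale (ab ^ 2 / (rhob * eps ^ 2)) (pd2 (sr U)))).
End Ops.

(* Main.v *)
Require Import Defs.
From Stdlib Require Import Reals ZArith Lra Lia Psatz FunctionalExtensionality.
Open Scope R_scope.

Lemma dl_change f x l l' : derivable_pt_lim f x l -> l = l' -> derivable_pt_lim f x l'.
Proof. intros H ->; exact H. Qed.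

Lemma dl_plus f g x a b : derivable_pt_lim f x a -> derivable_pt_lim g x b ->
  derivable_pt_lim (fun s => f s + g s) x (a + b).
Proof. intros; apply derivable_pt_lim_plus; auto. Qed.

Lemma dl_mult f g x a b : derivable_pt_lim f x a -> derivable_pt_lim g x b ->
  derivable_pt_lim (fun s => f s * g s) x (a * g x + f x * b).
Proof. intros; apply derivable_pt_lim_mult; auto. Qed.

Lemma dl_scal c f x a : derivable_pt_lim f x a ->
  derivable_pt_lim (fun s => c * f s) x (c * a).
Proof. intros H. apply dl_change with (0 * f x + c * a). apply (dl_mult (fun _ => c) f). apply derivable_pt_lim_const. exact H. ring. Qed.

Lemma dl_sq f x a : derivable_pt_lim f x a ->
  derivable_pt_lim (fun s => f s * f s) x (2 * f x * a).
Proof. intros H. apply dl_change with (a * f x + f x * a). apply dl_mult; exact H. ring. Qed.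

Lemma dl_lin c d f g x a b : derivable_pt_lim f x a -> derivable_pt_lim g x b ->
  derivable_pt_lim (fun s => c * f s + d * g s) x (c * a + d * b).
Proof. intros. apply dl_plus; apply dl_scal; auto. Qed.

Lemma gron (E dE : R -> R) C T : 0 < T ->
  (forall s, 0 <= s -> derivable_pt_lim E s (dE s)) ->
  (forall s, 0 < s -> dE s <= C * E s) ->
  E 0 = 0 -> (forall s, 0 <= s -> 0 <= E s) -> E T = 0.
Proof.
  intros HT Hd Hb H0 Hp.
  set (F := fun s => E s * exp (- C * s)).
  set (F' := fun s => dE s * exp (- C * s) + E s * (exp (- C * s) * (- C))).
  assert (HF : forall c, 0 <= c <= T -> derivable_pt_lim F c (F' c)).
  { intros c Hc. unfold F, F'.
    apply dl_change with (dE c * exp (- C * c) + E c * (exp (- C * c) * (- C))); [|reflexivity].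
    apply (dl_mult E (fun s => exp (- C * s))). apply Hd; lra.
    assert (Hl : derivable_pt_lim (fun s => - C * s) c (- C * 1)).
    { apply (dl_scal (-C) (fun s => s)). apply derivable_pt_lim_id. }
    assert (Hc2 := derivable_pt_lim_comp (fun s => - C * s) exp c _ _ Hl (derivable_pt_lim_exp _)).
    eapply dl_change. exact Hc2. ring. }
  destruct (MVT_cor2 F F' 0 T HT HF) as [c [Hc1 Hc2]].
  assert (F' c <= 0).
  { unfold F'. assert (0 < exp (-C*c)) by apply exp_pos.
    assert (dE c <= C * E c) by (apply Hb; lra). nra. }
  assert (F T <= 0).
  { unfold F in *. rewrite H0 in Hc1. nra. }
  unfold F in H1. assert (0 < exp (-C*T)) by apply exp_pos.
  assert (0 <= E T) by (apply Hp; lra). nra.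
Qed.

Lemma sum_ge_term f n i : (forall k, 0 <= f k) -> (i <= n)%nat -> f i <= sum_f_R0 f n.
Proof.
  intros Hf. induction n; intros Hi.
  - assert (i = 0%nat) by lia. subst. simpl. lra.
  - simpl. destruct (Nat.eq_dec i (S n)).
    + subst. assert (0 <= sum_f_R0 f n) by (apply cond_pos_sum; auto). lra.
    + assert (f i <= sum_f_R0 f n) by (apply IHn; lia). specialize (Hf (S n)). lra.
Qed.

Lemma Cnorm2_ge0 x : 0 <= Cnorm2 x.
Proof. unfold Cnorm2. nra. Qed.

Lemma w2_ge1 a b : 1 <= w2 a b.
Proof. unfold w2. assert (0 <= IZR a ^ 2) by (apply pow2_ge_0). assert (0 <= IZR b ^ 2) by apply pow2_ge_0. nra. Qed.

Lemma boxsum_term N g a b : (forall x y, 0 <= g x y) ->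
  (Z.abs a <= Z.of_nat N)%Z -> (Z.abs b <= Z.of_nat N)%Z -> g a b <= boxsum N g.
Proof.
  intros Hg Ha Hb. unfold boxsum.
  set (i := Z.to_nat (a + Z.of_nat N)). set (j := Z.to_nat (b + Z.of_nat N)).
  assert (Ei : (Z.of_nat i - Z.of_nat N)%Z = a) by (unfold i; lia).
  assert (Ej : (Z.of_nat j - Z.of_nat N)%Z = b) by (unfold j; lia).
  apply Rle_trans with (sum_f_R0 (fun j0 => g (Z.of_nat i - Z.of_nat N)%Z (Z.of_nat j0 - Z.of_nat N)%Z) (2 * N)).
  - pattern a at 1; rewrite <- Ei. pattern b at 1; rewrite <- Ej.
    apply (sum_ge_term (fun j0 => g (Z.of_nat i - Z.of_nat N)%Z (Z.of_nat j0 - Z.of_nat N)%Z)).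
    intros; auto. unfold j; lia.
  - apply (sum_ge_term (fun i0 => sum_f_R0 (fun j0 => g (Z.of_nat i0 - Z.of_nat N)%Z (Z.of_nat j0 - Z.of_nat N)%Z) (2 * N))).
    intros; apply cond_pos_sum; auto. unfold i; lia.
Qed.

Lemma H2S_mode V e a b : H2S_le V e ->
  Cnorm2 (sr V a b) + Cnorm2 (su1 V a b) + Cnorm2 (su2 V a b) <= e.
Proof.
  intros H. specialize (H (Z.to_nat (Z.abs a + Z.abs b))).
  eapply Rle_trans; [| exact H].
  eapply Rle_trans; [| apply (boxsum_term _ (fun a b => w2 a b *
     (Cnorm2 (sr V a b) + Cnorm2 (su1 V a b) + Cnorm2 (su2 V a b))) a b)].
  - pose proof (w2_ge1 a b). pose proof (Cnorm2_ge0 (sr V a b)).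
    pose proof (Cnorm2_ge0 (su1 V a b)). pose proof (Cnorm2_ge0 (su2 V a b)). nra.
  - intros x y. pose proof (w2_ge1 x y). pose proof (Cnorm2_ge0 (sr V x y)).
    pose proof (Cnorm2_ge0 (su1 V x y)). pose proof (Cnorm2_ge0 (su2 V x y)). nra.
  - lia.
  - lia.
Qed.

Lemma inH2_inL2 f : inH2 f -> inL2 f.
Proof.
  intros [M HM]. exists M. intros N. eapply Rle_trans; [| apply (HM N)].
  unfold boxsum. apply sum_Rle. intros. apply sum_Rle. intros.
  unfold w0. pose proof (w2_ge1 (Z.of_nat n - Z.of_nat N) (Z.of_nat n0 - Z.of_nat N)).
  pose proof (Cnorm2_ge0 (f (Z.of_nat n - Z.of_nat N)%Z (Z.of_nat n0 - Z.of_nat N)%Z)). nra.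
Qed.

Definition ext (x : R -> R) (d0 : R) (t : R) := if Rle_dec 0 t then x t else x 0 + t * d0.

Lemma ext_deriv (sel : State -> R)
  (Hadd : forall X Y, sel (Sadd X Y) = sel X + sel Y)
  (Hsc : forall r X, sel (Sscale r X) = r * sel X)
  (Hb : forall V e, H2S_le V e -> sel V * sel V <= e)
  U dU (HC1 : C1_H2 U dU) t (Ht : 0 <= t) :
  derivable_pt_lim (ext (fun s => sel (U s)) (sel (dU 0))) t (sel (dU t)).
Proof.
  intros eps Heps.
  destruct HC1 as [_ [HD _]].
  destruct (HD t Ht ((eps/2) * (eps/2))) as [d [Hd Hh]]. { nra. }
  assert (key : forall h, h <> 0 -> Rabs h < d -> 0 <= t + h ->
     Rabs ((sel (U (t+h)) - sel (U t)) / h - sel (dU t)) < eps).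
  { intros h Hh0 Hhd Hth. specialize (Hh h Hh0 Hhd Hth). apply Hb in Hh.
    unfold Ssub in Hh. rewrite !Hadd, !Hsc, Hadd, Hsc in Hh.
    set (v := (sel (U (t+h)) - sel (U t)) / h - sel (dU t)).
    assert (Ev : v = / h * (sel (U (t + h)) + -1 * sel (U t)) + -1 * sel (dU t)).
    { unfold v. field. auto. }
    rewrite <- Ev in Hh. apply Rabs_def1; nra. }
  destruct (Rle_lt_or_eq_dec 0 t Ht) as [Htp | Ht0].
  - assert (Hm : 0 < Rmin d t) by (apply Rmin_pos; auto).
    exists (mkposreal _ Hm). intros h Hh0 Hhd. simpl in Hhd.
    assert (Rabs h < d) by (eapply Rlt_le_trans; [exact Hhd| apply Rmin_l]).
    assert (Rabs h < t) by (eapply Rlt_le_trans; [exact Hhd| apply Rmin_r]).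
    assert (0 <= t + h) by (apply Rabs_def2 in H0; lra).
    unfold ext. destruct (Rle_dec 0 (t+h)); [|lra]. destruct (Rle_dec 0 t); [|lra].
    apply key; auto.
  - subst t. exists (mkposreal _ Hd). intros h Hh0 Hhd. simpl in Hhd.
    unfold ext. destruct (Rle_dec 0 (0+h)) as [Hp|Hn]; destruct (Rle_dec 0 0); try lra.
    + apply key; auto.
    + replace (0 + h) with h by ring. replace (0 + h) with h in Hn by ring.
      replace ((sel (U 0) + h * sel (dU 0) - sel (U 0)) / h - sel (dU 0)) with 0 by (field; auto).
      rewrite Rabs_R0. auto.
Qed.

Lemma alg_bound n2 l c1 c2 x1 x2 y1 y2 : 0 <= n2 ->
  2*(l*(n2*(x1*x1+x2*x2) + (y1*y1+y2*y2)) + n2*(c1*(x1*y1+x2*y2)+c2*(x1*y2-x2*y1)))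
  <= (2*Rabs l + c1*c1+c2*c2+2*n2) * (n2*(x1*x1+x2*x2) + (y1*y1+y2*y2)).
Proof.
  intros Hn.
  set (E := n2*(x1*x1+x2*x2) + (y1*y1+y2*y2)).
  assert (HE : 0 <= E) by (unfold E; nra).
  assert (Hl : l * E <= Rabs l * E).
  { apply Rmult_le_compat_r; auto. apply Rle_abs. }
  assert (HQ : 2*(c1*(x1*y1+x2*y2)+c2*(x1*y2-x2*y1)) <= (c1*c1+c2*c2)*(x1*x1+x2*x2) + 2*(y1*y1+y2*y2)).
  { pose proof (pow2_ge_0 (c1*x1 - y1)); pose proof (pow2_ge_0 (c1*x2 - y2)); pose proof (pow2_ge_0 (c2*x1 - y2)); pose proof (pow2_ge_0 (c2*x2 + y1)). nra. }
  assert (HQ2 : n2 * (2*(c1*(x1*y1+x2*y2)+c2*(x1*y2-x2*y1))) <= n2*((c1*c1+c2*c2)*(x1*x1+x2*x2) + 2*(y1*y1+y2*y2))).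
  { apply Rmult_le_compat_l; auto. }
  assert (0 <= (c1*c1+c2*c2)) by nra.
  assert (n2*(y1*y1+y2*y2) <= n2 * E).
  { apply Rmult_le_compat_l; auto. unfold E. nra. }
  assert (n2*(x1*x1+x2*x2) <= E) by (unfold E; nra).
  assert ((c1*c1+c2*c2) * (n2*(x1*x1+x2*x2)) <= (c1*c1+c2*c2) * E) by (apply Rmult_le_compat_l; auto).
  nra.
Qed.

Lemma comp_deriv (p : State -> Fcoef) (q : Cx -> R) (hp : p = sr \/ p = su1 \/ p = su2)
  (hq : q = re \/ q = im) a b U dU (HC1 : C1_H2 U dU) t (Ht : 0 <= t) :
  derivable_pt_lim (ext (fun s => q (p (U s) a b)) (q (p (dU 0) a b))) t (q (p (dU t) a b)).
Proof.
  apply (ext_deriv (fun S => q (p S a b))); auto.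
  - intros; destruct hp as [->|[->| ->]]; destruct hq as [->| ->]; reflexivity.
  - intros; destruct hp as [->|[->| ->]]; destruct hq as [->| ->]; reflexivity.
  - intros V e H. apply (H2S_mode V e a b) in H.
    pose proof (Cnorm2_ge0 (sr V a b)). pose proof (Cnorm2_ge0 (su1 V a b)).
    pose proof (Cnorm2_ge0 (su2 V a b)).
    destruct hp as [->|[->| ->]]; destruct hq as [->| ->]; unfold Cnorm2 in *; nra.
Qed.

Lemma Rplus_eq_sub d L R0 : d + L = R0 -> d = R0 - L.
Proof. intros; lra. Qed.

Lemma ext_pos x d0 s : 0 <= s -> ext x d0 s = x s.
Proof. intros H; unfold ext; destruct (Rle_dec 0 s); lra. Qed.

Lemma mode_zero (eps dt dx1 dx2 rhob ab ub1 ub2 b1 b2 b3 : R)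
  (Heps : 0 < eps) (Hrhob : 0 < rhob)
  (U dU : R -> State)
  (HC1 : C1_H2 U dU)
  (Heq : forall t, 0 <= t ->
     Sadd (dU t) (Lop (mkP eps dt dx1 dx2 rhob ab ub1 ub2 b1 b2 b3) (U t))
     = Bop (mkP eps dt dx1 dx2 rhob ab ub1 ub2 b1 b2 b3) (U t))
  (H0 : inE (U 0)) (a b : Z) T (HT : 0 < T) :
  (IZR a * IZR a + IZR b * IZR b) * (re (sr (U T) a b) * re (sr (U T) a b) + im (sr (U T) a b) * im (sr (U T) a b))
  + ((IZR a * re (su1 (U T) a b) + IZR b * re (su2 (U T) a b)) * (IZR a * re (su1 (U T) a b) + IZR b * re (su2 (U T) a b))
  + (IZR a * im (su1 (U T) a b) + IZR b * im (su2 (U T) a b)) * (IZR a * im (su1 (U T) a b) + IZR b * im (su2 (U T) a b))) = 0.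
Proof.
  set (A := IZR a). set (B := IZR b). set (n2 := A * A + B * B).
  set (X (p : State -> Fcoef) (q : Cx -> R) := ext (fun s => q (p (U s) a b)) (q (p (dU 0) a b))).
  set (D (p : State -> Fcoef) (q : Cx -> R) s := q (p (dU s) a b)).
  set (E := fun s => n2 * (X sr re s * X sr re s + X sr im s * X sr im s) +
     ((A * X su1 re s + B * X su2 re s) * (A * X su1 re s + B * X su2 re s) +
      (A * X su1 im s + B * X su2 im s) * (A * X su1 im s + B * X su2 im s))).
  set (dE := fun s => n2 * (2 * X sr re s * D sr re s + 2 * X sr im s * D sr im s) +
     (2 * (A * X su1 re s + B * X su2 re s) * (A * D su1 re s + B * D su2 re s) +
      2 * (A * X su1 im s + B * X su2 im s) * (A * D su1 im s + B * D su2 im s))).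
  set (om := ub1 * A + ub2 * B).
  set (K := ab ^ 2 / (rhob * eps ^ 2)).
  set (cc := b3 * ab ^ 2 / eps ^ 2).
  set (lam := - dt * b1 * om * om - dt * cc * n2 - 1/2 * (dx1 * Rabs ub1 * A * A + dx2 * Rabs ub2 * B * B)).
  set (m := dt * b2 * om).
  set (c1 := - (rhob + K) * m).
  set (c2 := rhob - K).
  assert (Hn2 : 0 <= n2) by (unfold n2; nra).
  assert (HE : E T = 0).
  { apply (gron E dE (2*Rabs lam + c1*c1+c2*c2+2*n2) T HT).
    - intros s Hs. unfold E, dE.
      apply (dl_plus (fun s => n2 * (X sr re s * X sr re s + X sr im s * X sr im s))).
      apply (dl_scal n2 (fun s => X sr re s * X sr re s + X sr im s * X sr im s)).
      apply (dl_plus (fun s => X sr re s * X sr re s) (fun s => X sr im s * X sr im s)).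
      apply (dl_sq (X sr re)); apply comp_deriv; auto.
      apply (dl_sq (X sr im)); apply comp_deriv; auto.
      apply (dl_plus (fun s => (A * X su1 re s + B * X su2 re s) * (A * X su1 re s + B * X su2 re s))
                     (fun s => (A * X su1 im s + B * X su2 im s) * (A * X su1 im s + B * X su2 im s))).
      apply (dl_sq (fun s => A * X su1 re s + B * X su2 re s)).
      apply (dl_lin A B (X su1 re) (X su2 re)); apply comp_deriv; auto.
      apply (dl_sq (fun s => A * X su1 im s + B * X su2 im s)).
      apply (dl_lin A B (X su1 im) (X su2 im)); apply comp_deriv; auto.
    - intros s Hs.
      unfold dE, E; cbv beta. unfold X, D. rewrite !ext_pos by lra.
      pose proof (Heq s (Rlt_le _ _ Hs)) as Hq.
      pose proof (Rplus_eq_sub _ _ _ (f_equal (fun S => re (sr S a b)) Hq)) as F1.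
      pose proof (Rplus_eq_sub _ _ _ (f_equal (fun S => im (sr S a b)) Hq)) as F2.
      pose proof (Rplus_eq_sub _ _ _ (f_equal (fun S => re (su1 S a b)) Hq)) as F3.
      pose proof (Rplus_eq_sub _ _ _ (f_equal (fun S => im (su1 S a b)) Hq)) as F4.
      pose proof (Rplus_eq_sub _ _ _ (f_equal (fun S => re (su2 S a b)) Hq)) as F5.
      pose proof (Rplus_eq_sub _ _ _ (f_equal (fun S => im (su2 S a b)) Hq)) as F6.
      simpl in F1, F2, F3, F4, F5, F6.
      rewrite F1, F2, F3, F4, F5, F6. clear F1 F2 F3 F4 F5 F6 Hq.
      fold A B.
      set (x1 := re (sr (U s) a b)). set (x2 := im (sr (U s) a b)).
      set (p1 := re (su1 (U s) a b)). set (p2 := im (su1 (U s) a b)).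
      set (q1 := re (su2 (U s) a b)). set (q2 := im (su2 (U s) a b)).
      apply Rle_trans with (2*(lam*(n2*(x1*x1+x2*x2) + ((A*p1+B*q1)*(A*p1+B*q1)+(A*p2+B*q2)*(A*p2+B*q2)))
         + n2*(c1*(x1*(A*p1+B*q1)+x2*(A*p2+B*q2))+c2*(x1*(A*p2+B*q2)-x2*(A*p1+B*q1))))).
      + apply Req_le. unfold lam, c1, c2, m, K, cc, om, n2.
        field. split; apply Rgt_not_eq; auto.
      + apply alg_bound; auto.
    - unfold E. unfold X. rewrite !ext_pos by lra.
      destruct H0 as [_ [Hp1 [Hp2 Hdv]]].
      pose proof (f_equal (fun f => re (f a b)) Hp1) as E1.
      pose proof (f_equal (fun f => im (f a b)) Hp1) as E2.
      pose proof (f_equal (fun f => re (f a b)) Hp2) as E3.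
      pose proof (f_equal (fun f => im (f a b)) Hp2) as E4.
      pose proof (f_equal (fun f => re (f a b)) Hdv) as E5.
      pose proof (f_equal (fun f => im (f a b)) Hdv) as E6.
      simpl in E1, E2, E3, E4, E5, E6. fold A B in E1, E2, E3, E4, E5, E6.
      unfold n2.
      assert (Hy1 : A * re (su1 (U 0) a b) + B * re (su2 (U 0) a b) = 0) by lra.
      assert (Hy2 : A * im (su1 (U 0) a b) + B * im (su2 (U 0) a b) = 0) by lra.
      rewrite Hy1, Hy2. nra.
    - intros s Hs. unfold E; cbv beta.
      pose proof (pow2_ge_0 (A * X su1 re s + B * X su2 re s)). pose proof (pow2_ge_0 (A * X su1 im s + B * X su2 im s)).
      assert (0 <= X sr re s * X sr re s + X sr im s * X sr im s) by nra.
      assert (0 <= n2 * (X sr re s * X sr re s + X sr im s * X sr im s)) by (apply Rmult_le_pos; auto).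
      nra. }
  unfold E, X in HE. rewrite !ext_pos in HE by lra. exact HE.
Qed.

Lemma split_zero A B x1 x2 y1 y2 :
  (A*A+B*B)*(x1*x1+x2*x2) + (y1*y1+y2*y2) = 0 ->
  A*x1 = 0 /\ A*x2 = 0 /\ B*x1 = 0 /\ B*x2 = 0 /\ y1 = 0 /\ y2 = 0.
Proof.
  intros H.
  assert (H1 : 0 <= (A*A+B*B)*(x1*x1+x2*x2)).
  { apply Rmult_le_pos; nra. }
  assert (Hy : y1*y1+y2*y2 = 0) by nra.
  assert (Hx : (A*x1)*(A*x1) + (A*x2)*(A*x2) + (B*x1)*(B*x1) + (B*x2)*(B*x2) = 0) by nra.
  repeat split; nra.
Qed.

Theorem mainTheorem7
  (eps dt dx1 dx2 rhob ab ub1 ub2 b1 b2 b3 : R)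
  (Heps : 0 < eps) (Hdt : 0 < dt) (Hdx1 : 0 < dx1) (Hdx2 : 0 < dx2)
  (Hrhob : 0 < rhob) (Hab : 0 < ab)
  (U dU : R -> State)
  (HC1 : C1_H2 U dU)
  (Heq : forall t, 0 <= t ->
     Sadd (dU t) (Lop (mkP eps dt dx1 dx2 rhob ab ub1 ub2 b1 b2 b3) (U t))
     = Bop (mkP eps dt dx1 dx2 rhob ab ub1 ub2 b1 b2 b3) (U t))
  (H0 : inE (U 0)) :
  forall t, 0 < t -> inE (U t).
Proof.
  intros t Ht.
  assert (Hz : forall a b, let A := IZR a in let B := IZR b in
    A * re (sr (U t) a b) = 0 /\ A * im (sr (U t) a b) = 0 /\
    B * re (sr (U t) a b) = 0 /\ B * im (sr (U t) a b) = 0 /\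
    A * re (su1 (U t) a b) + B * re (su2 (U t) a b) = 0 /\
    A * im (su1 (U t) a b) + B * im (su2 (U t) a b) = 0).
  { intros a b A B. apply split_zero.
    exact (mode_zero eps dt dx1 dx2 rhob ab ub1 ub2 b1 b2 b3 Heps Hrhob U dU HC1 Heq H0 a b t Ht). }
  destruct HC1 as [Hreg _]. destruct (Hreg t (Rlt_le _ _ Ht)) as [[h1 [h2 h3]] _].
  split; [| split; [| split]].
  - split; [|split]; apply inH2_inL2; auto.
  - apply functional_extensionality; intro a; apply functional_extensionality; intro b.
    destruct (Hz a b) as [z1 [z2 [z3 [z4 [z5 z6]]]]].
    unfold pd1, Fzero, Cmul, C0; simpl. f_equal; lra.
  - apply functional_extensionality; intro a; apply functional_extensionality; intro b.
    destruct (Hz a b) as [z1 [z2 [z3 [z4 [z5 z6]]]]].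
    unfold pd2, Fzero, Cmul, C0; simpl. f_equal; lra.
  - apply functional_extensionality; intro a; apply functional_extensionality; intro b.
    destruct (Hz a b) as [z1 [z2 [z3 [z4 [z5 z6]]]]].
    unfold divg, Fadd, pd1, pd2, Fzero, Cadd, Cmul, C0; simpl. f_equal; lra.
Qed.
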